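(* Let $G$ be a locally compact, Hausdorff, étale groupoid and $\alpha$ an automorphism of $G$. The groupoid $G^\infty_\alpha$ is minimal if and only if for each $y \in G^{(0)}$ the set $\bigcup_{n\le 0}\alpha^n([y])$ is dense in $G^{(0)}$. In particular, if $G$ is minimal, so is $G^\infty_\alpha$.
   Context: Let $E$ be the directed graph with one vertex $v$ and countably infinitely many edges $e_1,e_2,\dots$. Let $E^*$ be its finite paths (including $v$), $E^\infty$ its infinite paths, $P = E^*\sqcup E^\infty$, $|\mu|$ the length. $H_\infty$ is the groupoid $\{(\alpha x, |\alpha|-|\beta|, \beta x) : x\in P, \alpha,\beta\in E^*\}\subseteq P\times\mathbb{Z}\times P$ with $(x,m,y)(y,n,z)=(x,m+n,z)$, $(x,m,y)^{-1}=(y,-m,x)$, unit space identified with $P$, topology generated by the sets $Z((\alpha,\beta)\setminus F)=\{(\alpha x,|\alpha|-|\beta|,\beta x): x\in P, x\text{ does not begin with an edge in }F\}$ ($F$ finite); $c(x,m,y)=m$. An automorphism is a structure-preserving homeomorphism. $G^\infty_\alpha$ is $H_\infty\times G$ with product topology, unit space $H_\infty^{(0)}\times G^{(0)}$, $r(h,g)=(r(h),r(g))$, $s(h,g)=(s(h),\alpha^{c(h)}(s(g)))$, product $(h_1,g_1)(h_2,g_2)=(h_1h_2,g_1\alpha^{-c(h_1)}(g_2))$, inverse $(h,g)^{-1}=(h^{-1},\alpha^{c(h)}(g^{-1}))$. For $u \in G^{(0)}$, $[u] = \{r(g) : s(g) = u\}$; a groupoid is minimal if every orbit is dense in its unit space.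 *)

(* Defs.v *)
From HB Require Import structures.
From mathcomp Require Import all_boot all_order all_algebra.
From mathcomp Require Import all_classical topology.

Set Implicit Arguments.
Unset Strict Implicit.
Unset Printing Implicit Defensive.
Import Order.TTheory GRing.Theory Num.Theory.
Local Open Scope classical_set_scope.
Local Open Scope ring_scope.

(* A groupoid on a carrier type [G]: range and source maps, a (total) binary
   operation that is meaningful on composable pairs [(g,h)] with
   [g_s g = g_r h], and an inverse. *)
Record groupoid (G : Type) := Groupoid {
  g_r : G -> G;
  g_s : G -> G;
  g_mul : G -> G -> G;
  g_inv : G -> G }.

Definition is_groupoid (G : Type) (Gd : groupoid G) : Prop :=
  let r := g_r Gd in let s := g_s Gd in
  let m := g_mul Gd in let i := g_inv Gd in
  [/\ (forall g, [/\ r (r g) = r g, s (r g) = r g,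
                      r (s g) = s g & s (s g) = s g]),
      (forall g h, s g = r h -> r (m g h) = r g /\ s (m g h) = s h),
      (forall g h k, s g = r h -> s h = r k -> m (m g h) k = m g (m h k)),
      (forall g, m (r g) g = g /\ m g (s g) = g) &
      (forall g, [/\ r (i g) = s g, s (i g) = r g,
                     m g (i g) = r g & m (i g) g = s g])].

Definition g_units (G : Type) (Gd : groupoid G) : set G := range (g_r Gd).

Definition g_orbit (G : Type) (Gd : groupoid G) (u : G) : set G :=
  [set g_r Gd g | g in [set g | g_s Gd g = u]].

(* g_minimal: every g_orbit of a unit is dense in the unit space (for the
   subspace topology; since orbits lie in G^(0), this is G^(0) `<=` closure) *)
Definition g_minimal (G : topologicalType) (Gd : groupoid G) : Prop :=
  forall u, g_units Gd u -> g_units Gd `<=` closure (g_orbit Gd u).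

Definition lch_etale_groupoid (G : topologicalType) (Gd : groupoid G) : Prop :=
  [/\ is_groupoid Gd,
      [/\ continuous (g_r Gd), continuous (g_s Gd) & continuous (g_inv Gd)],
      {within [set p : G * G | g_s Gd p.1 = g_r Gd p.2],
         continuous (fun p : G * G => g_mul Gd p.1 p.2)},
      (* etale: r is a local homeomorphism *)
      (forall g : G, exists U : set G, [/\ open U, U g,
          (forall x y, U x -> U y -> g_r Gd x = g_r Gd y -> x = y) &
          (forall V, open V -> V `<=` U -> open (g_r Gd @` V))]) &
      locally_compact [set: G] /\ hausdorff_space G].

Definition automorphism (G : topologicalType) (Gd : groupoid G)
  (a ai : G -> G) : Prop :=
  [/\ cancel a ai /\ cancel ai a,
      continuous a /\ continuous ai,
      (forall g, a (g_r Gd g) = g_r Gd (a g) /\ a (g_s Gd g) = g_s Gd (a g)),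
      (forall g h, g_s Gd g = g_r Gd h -> a (g_mul Gd g h) = g_mul Gd (a g) (a h)) &
      (forall g, a (g_inv Gd g) = g_inv Gd (a g))].

Definition autpow (G : Type) (a ai : G -> G) (n : int) : G -> G :=
  match n with
  | Posz k => iter k a
  | Negz k => iter k.+1 ai
  end.

(** * The graph E: one vertex v, edges e_0, e_1, ... (indexed by nat) *)
(* Paths: finite paths (sequences of edges; [Fin [::]] is the vertex v)
   or infinite paths. *)
Inductive path := Fin of seq nat | Inf of (nat -> nat).

Definition path_cons (e : nat) (x : path) : path :=
  match x with
  | Fin b => Fin (e :: b)
  | Inf f => Inf (fun n => if n is k.+1 then f k else e)
  end.

Fixpoint pcat (al : seq nat) (x : path) : path :=
  match al with
  | [::] => x
  | e :: al' => path_cons e (pcat al' x)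
  end.

Definition begins_in (F : seq nat) (x : path) : Prop :=
  match x with
  | Fin (e :: _) => e \in F
  | Fin [::] => False
  | Inf f => f 0%N \in F
  end.

Definition in_Hinf (t : path * int * path) : Prop :=
  exists (al be : seq nat) (z : path),
    t = (pcat al z, (size al)%:Z - (size be)%:Z, pcat be z).

Definition Hinf := {t : path * int * path | in_Hinf t}.

Definition Hval (h : Hinf) : path * int * path := proj1_sig h.

Lemma in_Hinf_unit (x : path) : in_Hinf (x, 0, x).
Proof. by exists [::], [::], x; rewrite subrr. Qed.

Definition Hunit (x : path) : Hinf := exist _ (x, 0, x) (in_Hinf_unit x).

Lemma in_Hinf_inv (h : Hinf) :
  in_Hinf ((Hval h).2, - (Hval h).1.2, (Hval h).1.1).
Proof.
case: h => [[[x m] y] [al [be [z E]]]] /=; case: E => -> -> ->.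
by exists be, al, z; rewrite opprB.
Qed.

HB.instance Definition _ := gen_eqMixin Hinf.
HB.instance Definition _ := gen_choiceMixin Hinf.
HB.instance Definition _ := isPointed.Build Hinf (Hunit (Fin [::])).

Definition H_r (h : Hinf) : Hinf := Hunit (Hval h).1.1.
Definition H_s (h : Hinf) : Hinf := Hunit (Hval h).2.
Definition H_c (h : Hinf) : int := (Hval h).1.2.
Definition H_inv (h : Hinf) : Hinf := exist _ _ (in_Hinf_inv h).
(* (x,m,y)(y,n,z) = (x,m+n,z); the triple always lies in H_infinity for
   composable pairs; outside composable pairs the value is irrelevant *)
Definition H_mul (h1 h2 : Hinf) : Hinf :=
  let t := ((Hval h1).1.1, (Hval h1).1.2 + (Hval h2).1.2, (Hval h2).2) in
  match pselect (exists h : Hinf, Hval h = t) with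
  | left e => projT1 (cid e)
  | right _ => h1
  end.

Definition Hgroupoid : groupoid Hinf := Groupoid H_r H_s H_mul H_inv.

Definition Zset (al be F : seq nat) : set Hinf :=
  [set h | exists x : path, ~ begins_in F x /\
     Hval h = (pcat al x, (size al)%:Z - (size be)%:Z, pcat be x)].

Definition Zindex := (seq nat * seq nat * seq nat)%type.
Definition Zidx : Type := Zindex.
HB.instance Definition _ := gen_eqMixin Zidx.
HB.instance Definition _ := gen_choiceMixin Zidx.
HB.instance Definition _ := isPointed.Build Zidx ([::], [::], [::]).

HB.instance Definition _ := @isSubBaseTopological.Build Hinf Zidx setT
  (fun i : Zidx => Zset i.1.1 i.1.2 i.2).

Section Ginf.
Variables (G : topologicalType) (Gd : groupoid G) (a ai : G -> G).
Local Notation ap := (autpow a ai).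

Definition Ginf_r (p : Hinf * G) : Hinf * G :=
  (H_r p.1, g_r Gd p.2).
Definition Ginf_s (p : Hinf * G) : Hinf * G :=
  (H_s p.1, ap (H_c p.1) (g_s Gd p.2)).
Definition Ginf_mul (p q : Hinf * G) : Hinf * G :=
  (H_mul p.1 q.1, g_mul Gd p.2 (ap (- H_c p.1) q.2)).
Definition Ginf_inv (p : Hinf * G) : Hinf * G :=
  (H_inv p.1, ap (H_c p.1) (g_inv Gd p.2)).

Definition Ginf : groupoid (Hinf * G) :=
  Groupoid Ginf_r Ginf_s Ginf_mul Ginf_inv.
End Ginf.

(* Main.v *)
Require Import Defs.
From HB Require Import structures.
From mathcomp Require Import all_boot all_order all_algebra finmap.
From mathcomp Require Import all_classical topology.
Import Order.TTheory GRing.Theory Num.Theory.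
Local Open Scope classical_set_scope.
Local Open Scope ring_scope.

Lemma nbhs_Hinf (p : Hinf) (U : set Hinf) : nbhs p U ->
  exists DA : {fset Zidx}, (forall i, i \in DA -> Zset i.1.1 i.1.2 i.2 p) /\
    (forall q, (forall i, i \in DA -> Zset i.1.1 i.1.2 i.2 q) -> U q).
Proof.
rewrite nbhsE => -[B [Bop Bp sBU]].
move: Bop => [D' sD' E].
rewrite -E in Bp sBU.
case: Bp => A D'A Ap.
case: (sD' _ D'A) => DA _ EA.
exists DA; split.
  by move=> i iD; rewrite -EA in Ap; exact: Ap.
move=> q Hq; apply: sBU; exists A; first exact: D'A.
change (A q); rewrite -EA => i; exact: Hq.
Qed.

Fixpoint itake (n : nat) (f : nat -> nat) : seq nat :=
  if n is n'.+1 then f 0%N :: itake n' (fun k => f k.+1) else [::].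
Definition ptake n x := match x with Fin b => take n b | Inf f => itake n f end.

Lemma ptake_cons n e y : ptake n.+1 (path_cons e y) = e :: ptake n y.
Proof. by case: y. Qed.

Lemma ptake_pcat al z j : ptake (size al + j) (pcat al z) = al ++ ptake j z.
Proof. by elim: al => //= e al IH; rewrite addSn ptake_cons IH. Qed.

Lemma pcat_cat al be w : pcat (al ++ be) w = pcat al (pcat be w).
Proof. by elim: al => //= e al ->. Qed.

Lemma begins_cons F e y : begins_in F (path_cons e y) <-> e \in F.
Proof. by case: y. Qed.

Lemma nbeg_ptake F z w j : ~ begins_in F z -> ~ begins_in F w ->
  ~ begins_in F (pcat (ptake j z) w).
Proof.
case: j => [|j]; first by case: z => [[]|].
case: z => [[|e b]|f] Hz Hw; first by case: j.
- have -> : ptake j.+1 (Fin (e :: b)) = e :: ptake j (Fin b) by [].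
  by move=> /begins_cons.
- have -> : ptake j.+1 (Inf f) = f 0%N :: ptake j (Inf (fun k => f k.+1)) by [].
  by move=> /begins_cons.
Qed.

Lemma path_cons_inj e e' y y' : path_cons e y = path_cons e' y' -> e = e' /\ y = y'.
Proof.
case: y => [b|f]; case: y' => [b'|f'] //=; first by case=> -> ->.
case=> H; split; first by have := congr1 (fun h => h 0%N) H.
congr Inf; apply: functional_extensionality_dep => k.
by have := congr1 (fun h => h k.+1) H.
Qed.

Lemma pcat_inj al be z : size al = size be -> pcat al z = pcat be z -> al = be.
Proof.
elim: al be => [|e al IH] [|e' be] //= [Hs] /path_cons_inj [-> H].
by rewrite (IH be Hs H).
Qed.

Lemma pcat_nil be z : pcat be z = Fin [::] -> be = [::].
Proof. by case: be => // e b /=; case: (pcat b z). Qed.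

Lemma bounds (s : seq Zidx) : exists L B : nat,
  forall i, i \in s -> (size i.1.1 <= L)%N /\ (forall j, j \in i.2 -> (j < B)%N).
Proof.
elim: s => [|i0 s [L [B IH]]]; first by exists 0%N, 0%N.
have sumn_ge : forall (t : seq nat) j, j \in t -> (j <= sumn t)%N.
  elim=> // x t IHt j; rewrite inE => /orP [/eqP ->|/IHt]; first exact: leq_addr.
  by move=> h; apply: leq_trans h _; exact: leq_addl.
exists (maxn L (size i0.1.1)), (maxn B (sumn i0.2).+1) => i.
rewrite inE => /orP [/eqP ->|/IH [h1 h2]].
  split; first exact: leq_maxr.
  by move=> j /sumn_ge h; apply: leq_trans _ (leq_maxr _ _).
split; first by apply: leq_trans h1 (leq_maxl _ _).
by move=> j /h2 h; apply: leq_trans h (leq_maxl _ _).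
Qed.

Lemma nonpos_ap (G : Type) (a ai : G -> G) n : n <= 0 ->
  exists k, autpow a ai n = iter k ai.
Proof.
case: n => [k|k]; last by exists k.+1.
by rewrite lez_nat leqn0 => /eqP ->; exists 0%N.
Qed.

Lemma ap_nonpos (G : Type) (a ai : G -> G) k :
  exists2 n, n <= 0 & autpow a ai n = iter k ai.
Proof. by case: k => [|k]; [exists 0|exists (Negz k)]. Qed.

Theorem proposition5p3 (G : topologicalType) (Gd : groupoid G) (a ai : G -> G) :
  lch_etale_groupoid Gd -> automorphism Gd a ai ->
  (g_minimal (Ginf Gd a ai) <->
     (forall y, g_units Gd y ->
        g_units Gd `<=` closure (\bigcup_(n in [set n : int | n <= 0])
                                 (autpow a ai n @` g_orbit Gd y))))
  /\ (g_minimal Gd -> g_minimal (Ginf Gd a ai)).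
Proof.
move=> _ [[aK aiK] _ ars _ _].
move: ars; set r := g_r Gd; set s := g_s Gd => ars.
have air : forall g, ai (r g) = r (ai g).
  by move=> g; rewrite -{1}(aiK g) -(ars _).1 aK.
have ais : forall g, ai (s g) = s (ai g).
  by move=> g; rewrite -{1}(aiK g) -(ars _).2 aK.
have itar : forall k g, iter k a (r g) = r (iter k a g).
  by elim=> // k IH g; rewrite !iterS IH (ars _).1.
have itas : forall k g, iter k a (s g) = s (iter k a g).
  by elim=> // k IH g; rewrite !iterS IH (ars _).2.
have itair : forall k g, iter k ai (r g) = r (iter k ai g).
  by elim=> // k IH g; rewrite !iterS IH air.
have itais : forall k g, iter k ai (s g) = s (iter k ai g).
  by elim=> // k IH g; rewrite !iterS IH ais.
have itK : forall k u, iter k a (iter k ai u) = u.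
  by elim=> // k IH u; rewrite iterSr iterS aiK IH.
have itKi : forall k u, iter k ai (iter k a u) = u.
  by elim=> // k IH u; rewrite iterSr iterS aK IH.
have dir2 : (forall y, g_units Gd y ->
        g_units Gd `<=` closure (\bigcup_(n in [set n : int | n <= 0])
                                 (autpow a ai n @` g_orbit Gd y))) ->
    g_minimal (Ginf Gd a ai).
  move=> Hcond _ [[h0 q0] _ <-] _ [[h1 q1] _ <-] B nB.
  case: nB => [[U W] /= [nU nW] sUW].
  have [DA [HDA1 HDA2]] := @nbhs_Hinf _ _ nU.
  have [L [e HLB]] := bounds (enum_fset DA).
  set x := (Hval h0).1.1; set x' := (Hval h1).1.1.
  set al0 := ptake L x'.
  set y := iter (size al0).+1 ai (r q0).
  have Hy : g_units Gd y by exists (iter (size al0).+1 ai q0) => //; rewrite /y itair.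
  have Hw : g_units Gd (r q1) by exists q1.
  have [gg [[n hn [_ [g2 Hg2 <-] <-]] Wg]] := Hcond y Hy _ Hw W nW.
  have [k hk] := @nonpos_ap _ a ai _ hn; rewrite hk in Wg.
  set beta := al0 ++ nseq k.+1 e.
  have Hin : in_Hinf (pcat beta x, (size beta)%:Z - (size ([::] : seq nat))%:Z,
                      pcat [::] x) by exists beta, [::], x.
  set hh := exist _ _ Hin.
  exists (Ginf_r Gd (hh, iter k ai g2)); split.
    exists (hh, iter k ai g2) => //.
    rewrite /= /Ginf_s /Ginf_r /=; congr (_, _).
    have Hg2s : s g2 = y := Hg2.
    rewrite /H_c /= addn0 -/s -itais Hg2s /y -iterD size_cat size_nseq.
    by rewrite addnS -addSn addnC itK.
  apply: sUW; split => /=; last by have := itair k g2; rewrite /r => <-.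
  apply: HDA2 => i iDA.
  have [zz [nbz Heq]] := HDA1 i iDA.
  have [hL hB] := HLB i iDA.
  move: i iDA nbz Heq hL hB => [[al be] F] iDA /= nbz Heq hL hB.
  have Ex' : x' = pcat al zz by case: Heq.
  have Ex'b : x' = pcat be zz by case: Heq.
  have Hsz : size al = size be.
    case: Heq => _ /eqP; rewrite eq_sym subr_eq0 => /eqP; by case.
  have Eab : al = be := @pcat_inj al be zz Hsz (etrans (esym Ex') Ex'b).
  subst be.
  exists (pcat (ptake (L - size al) zz) (pcat (nseq k.+1 e) x)); split.
    apply: nbeg_ptake => //=.
    by move=> /begins_cons /hB; rewrite ltnn.
  have key : pcat beta x = pcat al (pcat (ptake (L - size al) zz) (pcat (nseq k.+1 e) x)).
    by rewrite /beta pcat_cat /al0 Ex' -{1}(subnKC hL) ptake_pcat pcat_cat.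
  by rewrite subrr /= key.
split; last first.
  move=> Hmin; apply: dir2 => y Hy w Hw.
  have := Hmin y Hy w Hw; apply: closureS => z Hz.
  by exists 0 => //; exists z.
split; last exact: dir2.
move=> Hmin y [g0 _ Hy] w [g1 _ Hw].
have U0 : g_units (Ginf Gd a ai) (Hunit (Fin [::]), y).
  by exists (Hunit (Fin [::]), g0) => //; rewrite -Hy.
have U1 : g_units (Ginf Gd a ai) (Hunit (Fin [::]), w).
  by exists (Hunit (Fin [::]), g1) => //; rewrite -Hw.
have Hc := Hmin _ U0 _ U1.
move=> B nB.
have nB' : nbhs (Hunit (Fin [::]), w) (setT `*` B).
  exists (setT, B) => //=; split => //; exact: filterT.
case: (Hc _ nB') => q [[[h g] Hp <-] [_ Bq]].
move: Hp Bq => /=.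
case: h => t Ht; have [al [be [z Et]]] := Ht.
move=> Hp Bq.
have /= Hs := congr1 (fun p => Hval p.1) Hp.
have /= Ha := congr1 snd Hp.
rewrite /H_c /= Et /= in Ha Hs.
case: Hs => /pcat_nil Hbe; rewrite Hbe /= addn0 in Ha => _.
set k := size al in Ha.
have [n hn hap] := @ap_nonpos _ a ai k.
exists (g_r Gd g); split => //.
exists n => //.
exists (r (iter k a g)).
  by exists (iter k a g) => //=; have := itas k g; rewrite /s => <-.
by rewrite hap itair itKi.
Qed.
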